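(* Let $E$ be a finite directed graph and $KE$ its path algebra. Then (i) $\mathrm{GKdim}(KE)=0$ if and only if $KE$ is finite-dimensional; (ii) if $0\neq\mathrm{GKdim}(KE)<\infty$, then $\mathrm{h}_{\mathrm{alg}}(KE)=0$ and $KE$ is infinite-dimensional.
   Context: A finite directed graph $E=(E^0,E^1,s,r)$ has finitely many vertices and edges, with source and range maps $s,r:E^1\to E^0$. Paths are finite sequences $e_1\cdots e_n$ of edges with $r(e_i)=s(e_{i+1})$; vertices are paths of length $0$. The path algebra $KE$ over a field $K$ has basis all paths with concatenation product (zero when not composable); its standard filtration $V_n$ is the span of paths of length $\le n$. $\mathrm{h}_{\mathrm{alg}}(KE)=0$ if $KE$ is finite-dimensional and $\limsup_n\frac1n\log\dim(V_n/V_{n-1})$ otherwise. $\mathrm{GKdim}(A)=\limsup_{n}\log\dim(V^n)/\log n$ for a finite-dimensional generating subspace $V$ of the algebra $A$, where $V^n$ is the span of products of at most $n$ elements of $V$ (and $\mathrm{GKdim}(A)=\infty$ if the growth is not polynomially bounded). *)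

(* Defs.v *)
From HB Require Import structures.
From mathcomp Require Import all_boot all_order all_algebra.
From mathcomp Require Import all_classical all_reals all_analysis.
Set Implicit Arguments. Unset Strict Implicit. Unset Printing Implicit Defensive.
Import Order.TTheory GRing.Theory Num.Theory.

(* A finite directed graph E = (E^0, E^1, s, r) is given by finite types
   [V] (vertices) and [Ed] (edges) with source/range maps [s r : Ed -> V].

   A path is encoded as a pair (v, es) : V * seq Ed:
   - (v, [::]) is the vertex v (path of length 0);
   - (v, e_1 :: ... :: e_n) with s e_1 = v and r e_i = s e_{i+1} is the path
     e_1 ... e_n (v is then determined by the path).
   This is a bijection with the set of paths of E. *)
Definition is_path (V Ed : finType) (s r : Ed -> V) (v : V) (es : seq Ed) : bool :=
  if es is e :: es' then (s e == v) && path (fun e f => r e == s f) e es'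
  else true.

Definition paths_le (V Ed : finType) (s r : Ed -> V) (n : nat) :=
  {p : V * n.-bseq Ed | is_path s r p.1 p.2}.

(* The K-subspace V_n of KE spanned by paths of length <= n is the free
   K-vector space on [paths_le s r n]; dim V_n is its dimension. *)
Definition dim_Vn (K : fieldType) (V Ed : finType) (s r : Ed -> V) (n : nat) : nat :=
  \dim (fullv : {vspace {ffun paths_le s r n -> K^o}}).

(* dim (V_n / V_{n-1}), with V_{-1} = 0. *)
Definition dim_grad (K : fieldType) (V Ed : finType) (s r : Ed -> V) (n : nat) : nat :=
  if n is m.+1 then dim_Vn K s r n - dim_Vn K s r m else dim_Vn K s r 0.

(* KE is finite-dimensional iff its basis (the set of all paths) is finite. *)
Definition pathalg_findim (V Ed : finType) (s r : Ed -> V) : Prop :=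
  exists l : seq (V * seq Ed), forall v es, is_path s r v es -> (v, es) \in l.

(* GK dimension of KE computed with the generating subspace V = V_1
   (span of vertices and edges), for which V^n = V_n. *)
Definition GKdim_pathalg (R : realType) (K : fieldType) (V Ed : finType)
    (s r : Ed -> V) : \bar R :=
  limn_esup (fun n => ((ln (dim_Vn K s r n)%:R) / (ln n%:R))%:E).

Definition halg_pathalg (R : realType) (K : fieldType) (V Ed : finType)
    (s r : Ed -> V) : \bar R :=
  if `[< pathalg_findim s r >] then 0%E
  else limn_esup (fun n => ((n%:R)^-1 * ln ((dim_grad K s r n)%:R : R))%:E).

(* Main.v *)
Require Import Defs.
From HB Require Import structures.
From mathcomp Require Import all_boot all_order all_algebra.
From mathcomp Require Import all_classical all_reals all_analysis.
From Stdlib Require Import Classical.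
From mathcomp Require Import lra.
Set Implicit Arguments. Unset Strict Implicit. Unset Printing Implicit Defensive.
Import Order.TTheory GRing.Theory Num.Theory.

Definition pth (V Ed : finType) (s r : Ed -> V) n (p : paths_le s r n) : V * seq Ed :=
  ((val p).1, val (val p).2).

Lemma pth_inj (V Ed : finType) (s r : Ed -> V) n : injective (@pth V Ed s r n).
Proof.
move=> [[v1 b1] h1] [[v2 b2] h2]; rewrite /pth /= => -[e1 e2].
apply: val_inj => /=; congr (_, _) => //; exact: val_inj.
Qed.

Lemma dimVnE (K : fieldType) (V Ed : finType) (s r : Ed -> V) n :
  dim_Vn K s r n = #|{: paths_le s r n}|.
Proof. by rewrite /dim_Vn dimvf; exact: muln1. Qed.

Lemma findim_bound (V Ed : finType) (s r : Ed -> V) :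
  pathalg_findim s r -> exists C, forall n, #|{: paths_le s r n}| <= C.
Proof.
move=> [l hl]; exists (size l) => n.
rewrite cardE -(size_map (@pth V Ed s r n)); apply: uniq_leq_size.
  by rewrite map_inj_uniq ?enum_uniq //; exact: pth_inj.
move=> x /mapP [p _ ->]; apply: hl; case: p => [[v b] h]; exact: h.
Qed.

Lemma is_path_take (V Ed : finType) (s r : Ed -> V) v es k :
  is_path s r v es -> is_path s r v (take k es).
Proof.
case: es => [|e es] //=; case: k => [|k] //= /andP [-> hp] /=.
exact: take_path.
Qed.

Lemma long_paths (V Ed : finType) (s r : Ed -> V) :
  ~ pathalg_findim s r -> forall n, exists v es, is_path s r v es /\ n <= size es.
Proof.
move=> nf n; apply: NNPP => H; apply: nf.
exists (map (@pth V Ed s r n) (enum {: paths_le s r n})) => v es hp.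
have hs : size es <= n.
  rewrite leqNgt; apply/negP => hlt; apply: H; exists v, es; split => //.
  exact: ltnW.
have -> : (v, es) = pth (Sub (v, Bseq hs) hp : paths_le s r n) by [].
by apply: map_f; rewrite mem_enum.
Qed.

Lemma lower_bound (V Ed : finType) (s r : Ed -> V) :
  ~ pathalg_findim s r -> forall n, n.+1 <= #|{: paths_le s r n}|.
Proof.
move=> nf n; have [v [es [hp hn]]] := long_paths nf n.
have hs (k : 'I_n.+1) : size (take k es) <= n.
  by rewrite size_takel ?(leq_trans _ hn) // -ltnS.
pose g (k : 'I_n.+1) : {p : V * n.-bseq Ed | is_path s r p.1 p.2} :=
  exist _ (v, Bseq (hs k)) (is_path_take k hp).
have gs (k : 'I_n.+1) : size (val (val (g k)).2) = k.
  rewrite [g k]/g. change (size (take k es) = k).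
  by rewrite size_takel // (leq_trans _ hn) // -ltnS.
have ginj : injective g.
  move=> k1 k2 /(congr1 (fun p => size (val (val p).2))).
  rewrite !gs => e; exact: val_inj.
have := @leq_card _ _ g ginj.
rewrite card_ord.
done.
Qed.
Local Open Scope ring_scope.

Lemma esup_small (R : realType) (u : (\bar R)^nat) :
  (forall n, (0 <= u n)%E) ->
  (forall e : R, 0 < e -> exists N, forall n, (N <= n)%N -> (u n <= e%:E)%E) ->
  limn_esup u = 0%E.
Proof.
move=> u0 ue; apply/eqP; rewrite eq_le; apply/andP; split; last first.
  rewrite limn_esup_lim; apply: lime_ge; first exact: is_cvg_esups.
  apply: nearW => n; apply: le_trans (u0 n) _.
  by apply: ereal_sup_ubound; exists n => /=.
apply/lee_addgt0Pr => e e0; rewrite add0e; have [N hN] := ue e e0.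
rewrite limn_esup_lim; apply: lime_le; first exact: is_cvg_esups.
near=> n; apply: ge_ereal_sup => _ [k /= nk <-]; apply: hN.
apply: leq_trans nk; near: n; by exists N.
Unshelve. all: by end_near. Qed.

Lemma esup_ge1 (R : realType) (u : (\bar R)^nat) :
  (forall n, (2 <= n)%N -> (1 <= u n)%E) -> (1 <= limn_esup u)%E.
Proof.
move=> h; rewrite limn_esup_lim; apply: lime_ge; first exact: is_cvg_esups.
near=> n; apply: le_trans (h n _) _; last first.
  by apply: ereal_sup_ubound; exists n => /=.
near: n; by exists 2%N.
Unshelve. all: by end_near. Qed.

Lemma esup_fin (R : realType) (u : (\bar R)^nat) :
  (forall n, (0 <= u n)%E) -> (limn_esup u < +oo)%E ->
  exists M : R, 0 <= M /\ exists N, forall n, (N <= n)%N -> (u n <= M%:E)%E.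
Proof.
move=> u0; rewrite limn_esup_lim (cvg_lim _ (@cvg_esups_inf _ u)) //.
move=> /ereal_inf_lt [_ [N _ <-] hN].
have uN : (u N <= esups u N)%E by apply: ereal_sup_ubound; exists N => /=.
have fN : esups u N \is a fin_num.
  by rewrite fin_numE; apply/andP; split; [rewrite gt_eqF // (lt_le_trans _ (le_trans (u0 N) uN)) // ltNyr | rewrite lt_eqF].
exists (fine (esups u N)); split.
  by rewrite -lee_fin fineK // (le_trans (u0 N) uN).
exists N => n Nn; rewrite fineK //.
by apply: ereal_sup_ubound; exists n.
Qed.

Lemma lnnat_ge0 (R : realType) (k : nat) : 0 <= ln (k%:R : R).
Proof.
case: k => [|k]; first by rewrite ln0.
by apply: ln_ge0; rewrite ler1n.
Qed.

Lemma lnnat_le (R : realType) (a b : nat) : (a <= b)%N -> ln (a%:R : R) <= ln b%:R.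
Proof.
case: a => [|a] ab; first by rewrite ln0 // lnnat_ge0.
rewrite ler_ln ?ler_nat // posrE ltr0n //; exact: leq_trans ab.
Qed.

Lemma GK_findim (R : realType) (K : fieldType) (V Ed : finType) (s r : Ed -> V) :
  pathalg_findim s r -> GKdim_pathalg R K s r = 0%E.
Proof.
move=> /findim_bound [C hC]; apply: esup_small.
  by move=> n; rewrite lee_fin divr_ge0 // lnnat_ge0.
move=> e e0; set C' := maxn C 1.
have lC : 0 <= ln (C'%:R : R) := lnnat_ge0 _ _.
exists (Num.truncn (expR (ln (C'%:R : R) / e))).+1 => n Nn.
have hn : expR (ln (C'%:R : R) / e) < n%:R.
  by apply: lt_le_trans (truncnS_gt _) _; rewrite ler_nat.
have h1 : 1 <= expR (ln (C'%:R : R) / e) by apply: le_trans (expR_ge1Dx _); rewrite lerDl divr_ge0 // ltW.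
have n0 : 0 < (n%:R : R) by apply: lt_trans (expR_gt0 _) hn.
have hl : ln (C'%:R : R) / e < ln n%:R.
  by rewrite -[X in X < _]expRK ltr_ln // posrE expR_gt0.
have ln0 : 0 < ln (n%:R : R) by apply: le_lt_trans hl; rewrite divr_ge0 // ltW.
have hd : ln ((dim_Vn K s r n)%:R : R) <= ln C'%:R.
  by apply: lnnat_le; rewrite dimVnE (leq_trans (hC n)) // leq_maxl.
rewrite lee_fin ler_pdivrMr //; apply: (le_trans hd).
by move: hl; rewrite ltr_pdivrMr // mulrC => /ltW.
Qed.

Lemma GK_infdim (R : realType) (K : fieldType) (V Ed : finType) (s r : Ed -> V) :
  ~ pathalg_findim s r -> (1 <= GKdim_pathalg R K s r)%E.
Proof.
move=> nf; apply: esup_ge1 => n n2.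
have hd := lower_bound nf n; rewrite -(dimVnE K) in hd.
have ln0 : 0 < ln (n%:R : R) by apply: ln_gt0; rewrite ltr1n.
rewrite lee_fin ler_pdivlMr // mul1r; apply: lnnat_le; exact: ltnW.
Qed.

Lemma dim_grad_le (K : fieldType) (V Ed : finType) (s r : Ed -> V) n :
  (dim_grad K s r n <= dim_Vn K s r n)%N.
Proof. by case: n => [|n] //=; rewrite leq_subr. Qed.

Theorem theorem5p13 (R : realType) (K : fieldType) (V Ed : finType) (s r : Ed -> V) :
  (GKdim_pathalg R K s r = 0%E <-> pathalg_findim s r) /\
  (GKdim_pathalg R K s r <> 0%E -> (GKdim_pathalg R K s r < +oo)%E ->
     halg_pathalg R K s r = 0%E /\ ~ pathalg_findim s r).
Proof.
have nf0 : ~ pathalg_findim s r -> GKdim_pathalg R K s r <> 0%E.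
  by move=> nf h; have := GK_infdim R K nf; rewrite h lee_fin; lra.
split.
  split; last exact: GK_findim.
  by move=> h; apply: NNPP => nf; exact: nf0 nf h.
move=> GK0 GKoo.
have nf : ~ pathalg_findim s r by move=> f; apply: GK0; exact: GK_findim.
split => //; rewrite /halg_pathalg asboolF //.
have [M [M0 [N0 hM]]] : exists M : R, 0 <= M /\ exists N, forall n, (N <= n)%N ->
    ((ln (dim_Vn K s r n)%:R / ln n%:R)%:E <= M%:E)%E.
  by apply: esup_fin => // n; rewrite lee_fin divr_ge0 // lnnat_ge0.
apply: esup_small.
  by move=> n; rewrite lee_fin mulr_ge0 // ?invr_ge0 // lnnat_ge0.
move=> e e0; set k := 2 * M / e.
exists (maxn (maxn N0 2) (Num.truncn (k ^+ 2)).+1) => n.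
rewrite !geq_max => /andP [/andP [hN0 h2] hk].
have ln0 : 0 < ln (n%:R : R) by apply: ln_gt0; rewrite ltr1n.
have n0 : 0 < (n%:R : R) by rewrite ltr0n; exact: leq_trans h2.
have hkn : k ^+ 2 < n%:R by apply: lt_le_trans (truncnS_gt _) _; rewrite ler_nat.
have := hM n hN0; rewrite lee_fin ler_pdivrMr // => hdM.
have hg : ln ((dim_grad K s r n)%:R : R) <= ln (dim_Vn K s r n)%:R.
  exact/lnnat_le/dim_grad_le.
set t := Num.sqrt (n%:R : R).
have t0 : 0 < t by rewrite sqrtr_gt0.
have nt : (n%:R : R) = t ^+ 2 by rewrite sqr_sqrtr // ltW.
have lt : ln (n%:R : R) < 2 * t.
  rewrite nt lnXn // mulr2n; have := ln_sublinear t0; lra.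
have k0 : 0 <= k by rewrite /k divr_ge0 // ?mulr_ge0 // ltW.
have ke : k * e = 2 * M by rewrite /k mulfVK // gt_eqF.
have tk : k < t.
  move: hkn; rewrite nt => hkn; nra.
rewrite lee_fin ler_pdivrMl // nt.
have h3 : M * ln (n%:R : R) <= M * (2 * t) by apply: ler_wpM2l => //; exact: ltW.
have h4 : k * t <= t * t by apply: ler_wpM2r => //; [exact: ltW | exact: ltW].
have h5 : e * (k * t) <= e * (t * t) by apply: ler_wpM2l => //; exact: ltW.
have : M * (2 * t) = e * (k * t) by rewrite mulrA (mulrC e) ke mulrA (mulrC M).
rewrite expr2; lra.
Qed.
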